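(* Let $I\subset G$ be a subgroup and $\mathrm{N}I=\sum_{g\in I}g\in\mathcal{O}[G]$. Then $\mathcal{O}[G]/(\mathrm{N}I)\cong R_\Psi$ with $\Psi=\{\psi\in\hat G:\psi(I)\neq1\}$; more precisely, the kernel of the canonical surjection $\mathcal{O}[G]\to R_\Psi$ is the ideal generated by $\mathrm{N}I$.
   Context: $G$ is a finite abelian group, $p$ an odd prime, and $\mathcal{O}$ a finite extension of $\mathbf{Z}_p$ containing all values of all characters $G\to\overline{\mathbf{Q}}_p^*$; $\hat G$ is the set of such characters. For a subset $\Psi\subset\hat G$, $R_\Psi$ denotes the image of the $\mathcal O$-algebra map $\mathcal{O}[G]\to\prod_{\psi\in\Psi}\mathcal{O}$, $x\mapsto(\psi(x))_{\psi\in\Psi}$. *)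

(* Defs.v *)
From HB Require Import structures.
From mathcomp Require Import all_boot all_order all_fingroup all_algebra all_solvable.
Set Implicit Arguments. Unset Strict Implicit. Unset Printing Implicit Defensive.
Import GRing.Theory.
Local Open Scope ring_scope.

Definition rdvd (R : comNzRingType) (a b : R) : Prop := exists c : R, b = c * a.

Definition is_dvr_unif (O : idomainType) (pi : O) : Prop :=
  [/\ pi != 0, pi \notin GRing.unit &
      forall x : O, x != 0 ->
        exists (n : nat) (u : O), u \in GRing.unit /\ x = u * pi ^+ n].

Definition pi_cauchy (O : idomainType) (pi : O) (a : nat -> O) : Prop :=
  forall k : nat, exists N : nat, forall m n : nat,
    (N <= m)%N -> (N <= n)%N -> rdvd (pi ^+ k) (a m - a n).

Definition pi_converges (O : idomainType) (pi : O) (a : nat -> O) (l : O) : Prop :=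
  forall k : nat, exists N : nat, forall n : nat,
    (N <= n)%N -> rdvd (pi ^+ k) (a n - l).

(* "O is a finite extension of Z_p", i.e. the ring of integers of a finite
   extension of Q_p: a complete DVR of characteristic 0 whose residue field
   is finite of characteristic p. *)
Definition finite_ext_Zp (p : nat) (O : idomainType) : Prop :=
  (forall n : nat, (n%:R : O) = 0 -> n = 0%N) /\
  exists pi : O,
    [/\ is_dvr_unif pi,
        (forall a : nat -> O, pi_cauchy pi a -> exists l, pi_converges pi a l),
        (exists s : seq O, forall x : O, exists2 r, r \in s & rdvd pi (x - r)) &
        rdvd pi (p%:R : O)].

(* elements of O[G] are functions G -> O (coefficients) *)
Definition gmul (O : comNzRingType) (gT : finGroupType)
  (x y : {ffun gT -> O}) : {ffun gT -> O} :=
  [ffun g => \sum_(h : gT) x h * y ((h^-1) * g)%g].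

Definition normI (O : comNzRingType) (gT : finGroupType) (I : {set gT})
  : {ffun gT -> O} := [ffun g => (g \in I)%:R].

Definition is_character (O : comNzRingType) (gT : finGroupType) (psi : gT -> O)
  : Prop := psi 1%g = 1 /\ forall g h : gT, psi (g * h)%g = psi g * psi h.

Definition char_eval (O : comNzRingType) (gT : finGroupType) (psi : gT -> O)
  (x : {ffun gT -> O}) : O := \sum_(g : gT) x g * psi g.

(* O contains all values of all characters of G (into Qbar_p^x), i.e. all
   exponent(G)-th roots of unity *)
Definition has_char_values (O : comNzRingType) (gT : finGroupType) : Prop :=
  exists z : O, primitive_root_of_unity (exponent [set: gT]) z.

(* Main.v *)
Require Import Defs.
From HB Require Import structures.
From mathcomp Require Import all_boot all_order all_fingroup all_algebra all_solvable.
From mathcomp Require Import all_field all_character.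
Import GRing.Theory Num.Theory.
Local Open Scope ring_scope.

Lemma sep (gT : finGroupType) : abelian [set: gT] -> forall g : gT, g != 1%g ->
  exists k : gT -> nat, (forall a b, k (a*b)%g = k a + k b %[mod exponent [set: gT]])%N
    /\ (k g != 0 %[mod exponent [set: gT]])%N.
Proof.
move=> ab g ng1.
have lin := char_abelianP _ ab.
have [i chig] : exists i : Iirr [set: gT], 'chi_i g != 1.
  apply/existsP; apply: contraT; rewrite negb_exists => /forallP H.
  have := cfRegE [set: gT]%G g; rewrite (negPf ng1) mulr0n cfReg_sum sum_cfunE.
  under eq_bigr => j _ do rewrite cfunE (eqP (negPn (H j))) mulr1.
  move=> E; have := cfRegE [set: gT]%G 1%g; rewrite cfReg_sum sum_cfunE.
  under eq_bigr => j _ do rewrite cfunE [X in _ * X]lin_char1 ?mulr1 //.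
  rewrite E eqxx mulr1n => /esym/eqP.
  by rewrite pnatr_eq0 -[_ == 0%N]negbK -lt0n cardG_gt0.
set e := exponent [set: gT].
have [w Hw] := C_prim_root_exists (exponent_gt0 [set: gT]).
have Ha : forall a, 'chi_i a ^+ e = 1.
  by move=> a; rewrite -lin_charX ?inE ?expg_exponent ?inE // lin_char1.
pose k a := val (sval (prim_rootP Hw (Ha a))).
have kE a : 'chi_i a = w ^+ k a by rewrite /k; case: (prim_rootP Hw (Ha a)).
exists k; split.
  move=> a b; apply/eqP; rewrite -(eq_prim_root_expr Hw) exprD -!kE.
  by rewrite lin_charM ?inE.
rewrite -(eq_prim_root_expr Hw) -kE expr0 //.
Qed.


Lemma char_shift (O : comNzRingType) (gT : finGroupType) (psi : gT -> O)
  (f : gT -> O) (h : gT) : is_character psi ->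
  \sum_g f (h * g)%g * psi g = psi h^-1%g * \sum_g f g * psi g.
Proof.
move=> [_ psiM]; rewrite mulr_sumr (reindex_inj (mulgI h^-1%g)) /=.
by apply: eq_bigr => g _; rewrite mulKVg psiM mulrCA.
Qed.

Lemma inj (O : idomainType) (gT : finGroupType) :
  (forall n : nat, (n%:R : O) = 0 -> n = 0%N) -> abelian [set: gT] ->
  has_char_values O gT -> forall x : {ffun gT -> O},
  (forall psi : gT -> O, is_character psi -> char_eval psi x = 0) -> x = 0.
Proof.
move=> ch0 ab [z Hz] x Hx.
set e := exponent [set: gT] in Hz.
have e_gt0 : (0 < e)%N by apply: exponent_gt0.
pose e' := e.-1; have eE : e = e'.+1 by rewrite /e' prednK.
rewrite eE in Hz.
pose P (k : {ffun gT -> 'I_e'.+1}) := [forall a, forall b, k (a * b)%g == k a + k b].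
pose psi (k : {ffun gT -> 'I_e'.+1}) (a : gT) := z ^+ (k a : nat).
have zD (i j : 'I_e'.+1) : z ^+ ((i + j)%R : 'I_e'.+1) = z ^+ i * z ^+ j.
  by rewrite [nat_of_ord _]/= expr_mod ?exprD // prim_expr_order.
have z1 (i : 'I_e'.+1) : (z ^+ i == 1) = (i == 0).
  by rewrite -(expr0 z) (eq_prim_root_expr Hz) mod0n modn_small.
have PE k : P k -> forall a b, k (a * b)%g = k a + k b.
  by move=> /forallP H a b; apply/eqP; move: (H a) => /forallP.
have P1 k : P k -> k 1%g = 0.
  move=> Pk; apply: (@addrI _ (k 1%g)); by rewrite addr0 -PE // mulg1.
have Pchar k : P k -> is_character (psi k).
  move=> Pk; split; first by rewrite /psi P1.
  by move=> a b; rewrite /psi PE // zD.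
have PD a b : P a -> P b -> P (a + b).
  move=> Pa Pb; apply/forallP => u; apply/forallP => v.
  by rewrite !ffunE !PE // addrACA.
have PN a : P a -> P (- a).
  move=> Pa; apply/forallP => u; apply/forallP => v.
  by rewrite !ffunE !PE // opprD.
pose S u := \sum_(k | P k) psi k u.
have S_ne1 u : u != 1%g -> S u = 0.
  move=> nu; have [kn [knM knu]] := @sep gT ab u nu.
  rewrite -/e eE in knM knu.
  pose k0 : {ffun gT -> 'I_e'.+1} := [ffun a => inZp (kn a)].
  have Pk0 : P k0.
    apply/forallP => a; apply/forallP => b; apply/eqP/val_inj.
    by rewrite !ffunE /= modnDm knM.
  have k0u : k0 u != 0.
    apply: contra knu => /eqP/(congr1 val); rewrite ffunE /= => ->.
    by rewrite mod0n.
  have : S u = S u * z ^+ (k0 u).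
    rewrite {1}/S (reindex_inj (addIr k0)) /=.
    rewrite (eq_bigl P); last first.
      move=> k; apply/idP/idP => [Pk|]; last by move=> Pk; apply: PD.
      by rewrite -(addrK k0 k); apply: PD => //; apply: PN.
    rewrite /S mulr_suml; apply: eq_bigr => k _.
    by rewrite /psi ffunE zD.
  move=> /eqP; rewrite -subr_eq0 -{1}(mulr1 (S u)) -mulrBr mulf_eq0 subr_eq0.
  by rewrite [1 == _]eq_sym z1 (negPf k0u) orbF => /eqP.
have S1 : S 1%g != 0.
  rewrite /S (eq_bigr (fun _ => 1)); last by move=> k Pk; rewrite /psi P1.
  rewrite sumr_const; apply/eqP => /ch0 /eqP.
apply/negP; rewrite -lt0n; apply/card_gt0P.
  by exists 0; rewrite unfold_in /=; apply/forallP => a; apply/forallP => b; rewrite !ffunE addr0.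
apply/ffunP => g0; rewrite ffunE.
have : \sum_(k | P k) psi k g0^-1%g * char_eval (psi k) x = 0.
  by apply: big1 => k Pk; rewrite Hx ?mulr0 //; apply: Pchar.
rewrite /char_eval.
under eq_bigr => k Pk do rewrite mulr_sumr.
rewrite exchange_big /=.
under eq_bigr => g _ do under eq_bigr => k Pk do
  rewrite mulrCA -(proj2 (Pchar k Pk)).
under eq_bigr => g _ do rewrite -mulr_sumr.
rewrite (bigD1 g0) //= [X in _ + X]big1 ?addr0.
  by rewrite mulVg => /eqP; rewrite mulf_eq0 (negPf S1) orbF => /eqP.
move=> g ng; rewrite -/(S _) S_ne1 ?mulr0 //.
by apply: contra ng => /eqP H; rewrite -(mulKVg g0 g) H mulg1.
Qed.

Lemma sum_char_I (O : idomainType) (gT : finGroupType) (I : {group gT}) (psi : gT -> O) :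
  is_character psi -> (exists2 g, g \in I & psi g != 1) -> \sum_(h in I) psi h = 0.
Proof.
move=> [psi1 psiM] [g0 Ig0 ng0].
have : \sum_(h in I) psi h = psi g0 * \sum_(h in I) psi h.
  rewrite {1}(reindex_inj (mulgI g0)) /= mulr_sumr.
  apply: eq_big => [h|h _]; first by rewrite groupMl.
  by rewrite psiM.
move=> /eqP; rewrite -subr_eq0 -{1}(mul1r (\sum_(h in I) psi h)) -mulrBl mulf_eq0.
by rewrite subr_eq0 eq_sym (negPf ng0) => /eqP.
Qed.

Theorem lemma2p2 (p : nat) (O : idomainType) (gT : finGroupType)
  (I : {group gT}) :
  prime p -> odd p -> finite_ext_Zp p O ->
  abelian [set: gT] -> has_char_values O gT ->
  forall x : {ffun gT -> O},
    (forall psi : gT -> O, is_character psi ->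
       (exists2 g, g \in I & psi g != 1) -> char_eval psi x = 0)
    <-> (exists y : {ffun gT -> O}, x = gmul (normI O I) y).
Proof.
move=> _ _ [ch0 _] ab hcv x; split => [Hx|[y ->] psi Cpsi Hpsi]; last first.
  rewrite /char_eval /gmul.
  under eq_bigr => g _ do rewrite ffunE mulr_suml.
  rewrite exchange_big /=.
  under eq_bigr => h _ do rewrite ffunE.
  under eq_bigr => h _ do under eq_bigr => g _ do rewrite -mulrA.
  under eq_bigr => h _ do rewrite -mulr_sumr (@char_shift _ _ psi (fun g => y g) h^-1%g Cpsi) invgK.
  have -> : \sum_h (h \in I)%:R * (psi h * \sum_g y g * psi g) =
            (\sum_(h in I) psi h) * \sum_g y g * psi g.
    rewrite mulr_suml [RHS]big_mkcond /=; apply: eq_bigr => h _.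
    by case: (h \in I); rewrite ?mul1r ?mul0r.
  by rewrite (@sum_char_I O gT I psi) // mul0r.
have inv h g : h \in I -> x (h * g)%g = x g.
  move=> Ih; pose zf : {ffun gT -> O} := [ffun g => x (h * g)%g - x g].
  have : zf = 0.
    apply: (@inj O gT ch0 ab hcv) => psi Cpsi.
    rewrite /char_eval.
    under eq_bigr => u _ do rewrite ffunE mulrBl.
    rewrite sumrB (@char_shift _ _ psi (fun g => x g) h Cpsi) -/(char_eval psi x).
    case: (boolP [exists g in I, psi g != 1]) => [/exists_inP [g0 Ig0 ng0]|].
      by rewrite Hx ?mulr0 ?subrr //; exists g0.
    rewrite negb_exists_in => /forall_inP H.
    by rewrite (eqP (negPn (H _ _))) ?mul1r ?subrr // groupV.
  by move=> /ffunP /(_ g); rewrite !ffunE => /eqP; rewrite subr_eq0 => /eqP.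
exists [ffun g => if g == repr (I :* g)%g then x g else 0].
apply/ffunP => g; rewrite ffunE.
set r := repr (I :* g)%g.
have rg : r \in (I :* g)%g by apply: mem_repr_rcoset.
have rgI : (r * g^-1)%g \in I by rewrite -mem_rcoset.
have h0I : (g * r^-1)%g \in I by rewrite -[g]invgK -invMg groupV.
rewrite (bigD1 (g * r^-1)%g) //= [X in _ + X]big1 ?addr0.
  rewrite !ffunE h0I mul1r invMg invgK mulgKV.
  have -> : (I :* r)%g = (I :* g)%g by apply/rcoset_eqP.
  by rewrite eqxx -(mulgKV g r) inv.
move=> h nh; rewrite !ffunE.
case Ih: (h \in I); last by rewrite mul0r.
have E1 : (I :* (h^-1 * g))%g = (I :* g)%g.
  rewrite rcosetM.
  by rewrite (@rcoset_id _ I h^-1) ?groupV ?Ih.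
rewrite E1.
case: eqP => [E|]; last by rewrite mulr0.
move: nh E; rewrite -/r => nh E.
by move: nh; rewrite -E invMg invgK mulgA mulgV mul1g eqxx.
Qed.
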